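(* Let $\rho_1\neq\rho_2$ be two rays of $C_{6,2}$ of type $(3,3)$ and let $\tau$ be the 2-face of $C_{6,2}$ spanned by $\rho_1$ and $\rho_2$. Then $\tau\subseteq\Phi(\mathcal Z_2^6)$.
   Context: $\mathcal Z_2$ is the set of zonoids in $\mathbb R^2$ (equivalently, centrally symmetric convex bodies). For $Z=(Z_1,\dots,Z_6)\in\mathcal Z_2^6$ let $\mathrm V_{ij}=\mathrm V(Z_i,Z_j)$ be the mixed area, and $\Phi(Z)\in\mathbb R^{15}$ the vector with coordinates $\mathrm V_{I_1}\mathrm V_{I_2}\mathrm V_{I_3}$ indexed by all partitions $I_1|I_2|I_3$ of $[6]$ into pairs. $C_{6,2}$ is the conic hull of $\Phi(\mathcal Z_2^6)$ (a polyhedral cone in which any two extreme rays span a 2-face). For a 6-tuple $U$ of nonzero vectors in $\mathbb R^2$, $\Phi(U)=\Phi([0,u_1],\dots,[0,u_6])$. A ray is of type $(3,3)$ if it is spanned by $\Phi(U)$ for some $U$ such that $[6]=J_1\sqcup J_2$ with $|J_1|=|J_2|=3$, the vectors indexed by $J_1$ are pairwise parallel, those indexed by $J_2$ are pairwise parallel, and no vector indexed by $J_1$ is parallel to one indexed by $J_2$. *)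

(* Defs.v *)
From HB Require Import structures.
From mathcomp Require Import all_boot all_order all_algebra.
From mathcomp Require Import all_classical all_reals all_analysis.
Set Implicit Arguments. Unset Strict Implicit. Unset Printing Implicit Defensive.
Import Order.TTheory GRing.Theory Num.Theory.
Import numFieldNormedType.Exports.
Local Open Scope classical_set_scope.
Local Open Scope ring_scope.

Section Defs.
Variable R : realType.

Definition msum (A B : set (R * R)) : set (R * R) :=
  [set z | exists a b, A a /\ B b /\ z = (a.1 + b.1, a.2 + b.2)].

Definition convex2 (K : set (R * R)) : Prop :=
  forall x y (t : R), K x -> K y -> 0 <= t -> t <= 1 ->
    K (t * x.1 + (1 - t) * y.1, t * x.2 + (1 - t) * y.2).

Definition convex_body2 (K : set (R * R)) : Prop :=
  K !=set0 /\ compact K /\ convex2 K.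

(* zonoids in R^2 = centrally symmetric convex bodies *)
Definition zonoid2 (K : set (R * R)) : Prop :=
  convex_body2 K /\
  exists c : R * R, forall x, K x -> K (2 * c.1 - x.1, 2 * c.2 - x.2).

Definition area2 (A : set (R * R)) : R :=
  fine ((@lebesgue_measure R \x @lebesgue_measure R)%E A).

(* mixed area: area(K+L) = area K + 2 V(K,L) + area L *)
Definition mixed_area (K L : set (R * R)) : R :=
  (area2 (msum K L) - area2 K - area2 L) / 2.

(* partitions of [6] = {0,..,5} into pairs, encoded as fixed-point-free involutions *)
Definition is_pairing (p : {ffun 'I_6 -> 'I_6}) : bool :=
  [forall i, (p (p i) == i) && (p i != i)].

Definition pairing := {p : {ffun 'I_6 -> 'I_6} | is_pairing p}.

(* Phi(Z) in R^15, coordinates indexed by pairings I1|I2|I3 *)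
Definition Phi (Z : 'I_6 -> set (R * R)) : pairing -> R :=
  fun p => \prod_(i < 6 | (i < (sval p) i)%N) mixed_area (Z i) (Z ((sval p) i)).

Definition segment0 (u : R * R) : set (R * R) :=
  [set z | exists t : R, 0 <= t /\ t <= 1 /\ z = (t * u.1, t * u.2)].

Definition PhiU (U : 'I_6 -> R * R) : pairing -> R :=
  Phi (fun i => segment0 (U i)).

Definition parallel2 (u v : R * R) : Prop := u.1 * v.2 - u.2 * v.1 = 0.

Definition type33_tuple (U : 'I_6 -> R * R) : Prop :=
  (forall i, U i <> (0, 0)) /\
  exists J1 : {set 'I_6}, #|J1| = 3%N /\
    (forall i j, i \in J1 -> j \in J1 -> parallel2 (U i) (U j)) /\
    (forall i j, i \notin J1 -> j \notin J1 -> parallel2 (U i) (U j)) /\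
    (forall i j, i \in J1 -> j \notin J1 -> ~ parallel2 (U i) (U j)).

Definition ray_of (v : pairing -> R) : set (pairing -> R) :=
  [set w | exists c : R, 0 <= c /\ w = (fun p => c * v p)].

Definition type33_ray (rho : set (pairing -> R)) : Prop :=
  exists U, type33_tuple U /\ rho = ray_of (PhiU U).

(* the cone spanned by two rays (the 2-face they span) *)
Definition cone2 (r1 r2 : set (pairing -> R)) : set (pairing -> R) :=
  [set w | exists x y, r1 x /\ r2 y /\ w = (fun p => x p + y p)].

Definition Phi_image : set (pairing -> R) :=
  [set w | exists Z : 'I_6 -> set (R * R), (forall i, zonoid2 (Z i)) /\ Phi Z = w].

End Defs.

(* Main.v *)
Require Import Defs.
From mathcomp Require Import all_boot all_order all_algebra.
From mathcomp Require Import all_classical all_reals all_analysis.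
From HB Require Import structures.
From mathcomp Require Import measurable_realfun.
From mathcomp Require Import ring lra zify.
Set Implicit Arguments. Unset Strict Implicit. Unset Printing Implicit Defensive.
Import Order.TTheory GRing.Theory Num.Theory.
Import numFieldNormedType.Exports.
Local Open Scope classical_set_scope.
Local Open Scope ring_scope.


Definition tshift {R : realType} (c : R) (x : R) : R := x + c.

Lemma measurable_tshift {R : realType} (c : R) : measurable_fun [set: R] (tshift c).
Proof. by apply: measurable_funD => //. Qed.

Definition tmeas {R : realType} (c : R) : set (measurableTypeR R) -> \bar R :=
  fun A => lebesgue_measure (tshift c @^-1` A).

Lemma tm0 (R : realType) (c : R) : (tmeas c set0 = 0)%E.
Proof. by rewrite /tmeas preimage_set0 measure0. Qed.
Lemma tm_ge0 (R : realType) (c : R) A : (0 <= tmeas c A)%E.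
Proof. by apply: measure_ge0. Qed.
Lemma tm_sigma (R : realType) (c : R) : semi_sigma_additive (tmeas c).
Proof.
move=> F mF tF mUF; rewrite /tmeas preimage_bigcup.
apply: measure_semi_sigma_additive.
- move=> n; rewrite -[X in measurable X]setTI; exact: (measurable_tshift c measurableT (mF n)).
- apply/trivIsetP => /= i j _ _ ij; rewrite -preimage_setI.
  by move/trivIsetP : tF => /(_ _ _ _ _ ij) ->//; rewrite preimage_set0.
- by rewrite -preimage_bigcup -[X in measurable X]setTI; exact: (measurable_tshift c measurableT mUF).
Qed.
HB.instance Definition _ (R : realType) (c : R) := isMeasure.Build _ _ _
  (tmeas c) (@tm0 R c) (@tm_ge0 R c) (@tm_sigma R c).

Lemma lebesgue_shift {R : realType} (c : R) (A : set R) : measurable A ->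
  lebesgue_measure [set x | A (x + c)] = lebesgue_measure A.
Proof.
move=> mA; symmetry.
have := @lebesgue_measure_unique R (tmeas c) _ A mA; apply.
move=> _ [[a b] _ <-].
rewrite -[RHS]/(lebesgue_measure (tshift c @^-1` (`]a, b]%classic : set R))).
have -> : tshift c @^-1` (`]a, b]%classic : set R) = (`](a - c), (b - c)]%classic : set R).
  apply/seteqP; split => x; rewrite /tshift /= !in_itv /=.
    by rewrite lerBrDr ltrBlDr.
  by rewrite lerBrDr ltrBlDr.
rewrite !lebesgue_measure_itv /= !lte_fin ltrD2r.
case: ifP => // _; rewrite -EFinD; congr (_%:E); ring.
Qed.


Notation mu2 := (@lebesgue_measure _ \x @lebesgue_measure _)%E.

Lemma vshear {R : realType} (k : R) (A : set (R * R)) :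
  (forall x, measurable (xsection A x)) ->
  (@lebesgue_measure R \x @lebesgue_measure R)%E [set z | A (z.1, z.2 + k * z.1)] =
  (@lebesgue_measure R \x @lebesgue_measure R)%E A.
Proof.
move=> mA; rewrite /product_measure1; apply: eq_integral => x _ /=.
have -> : xsection [set z | A (z.1, z.2 + k * z.1)] x =
   [set y | xsection A x (y + k * x)].
  by apply/seteqP; split => y; rewrite /xsection /= !inE.
exact: lebesgue_shift.
Qed.

Lemma measurable_hshear {R : realType} (k : R) :
  measurable_fun [set: R * R] (fun z : R * R => (z.1 + k * z.2, z.2)).
Proof.
apply/measurable_fun_pairP; split; last exact: measurable_snd.
apply: (@measurable_funD _ _ R _ fst (fun z : R * R => k * z.2)); first exact: measurable_fst.
apply: (@measurable_funM _ _ R _ (fun=> k) snd) => //; exact: measurable_snd.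
Qed.

Lemma hshear {R : realType} (k : R) (A : set (R * R)) : measurable A ->
  (@lebesgue_measure R \x @lebesgue_measure R)%E [set z | A (z.1 + k * z.2, z.2)] =
  (@lebesgue_measure R \x @lebesgue_measure R)%E A.
Proof.
move=> mA.
have mB : measurable [set z : R * R | A (z.1 + k * z.2, z.2)].
  have := measurable_hshear k measurableT mA; by rewrite setTI.
have E := @product_measure_unique _ _ _ _ _ (@lebesgue_measure R) (@lebesgue_measure R)
   (@lebesgue_measure R \x^ @lebesgue_measure R)%E
   (fun X Y mX mY => product_measure2E _ _ mX mY).
rewrite (E _ mA) (E _ mB).
rewrite /product_measure2; apply: eq_integral => y _ /=.
have -> : ysection [set z | A (z.1 + k * z.2, z.2)] y =
   [set x | ysection A y (x + k * y)].
  by apply/seteqP; split => x; rewrite /ysection /= !inE.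
apply: lebesgue_shift; exact: measurable_ysection.
Qed.


Definition PP {R : realType} (u v : R * R) : set (R * R) :=
  [set z | exists s t : R, 0 <= s <= 1 /\ 0 <= t <= 1 /\
     z = (s * u.1 + t * v.1, s * u.2 + t * v.2)].

Definition det2 {R : realType} (u v : R * R) : R := u.1 * v.2 - u.2 * v.1.

Lemma msum_segE {R : realType} (u v : R * R) :
  Defs.msum (segment0 u) (segment0 v) = PP u v.
Proof.
apply/seteqP; split => z.
  move=> [a [b [[s [s0 [s1 ->]]] [[t [t0 [t1 ->]]] ->]]]].
  by exists s, t; rewrite s0 s1 t0 t1.
move=> [s [t [/andP[s0 s1] [/andP[t0 t1] ->]]]].
by exists (s * u.1, s * u.2), (t * v.1, t * v.2); split; [exists s|split; [exists t|]].
Qed.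

Lemma segment0E {R : realType} (u : R * R) : segment0 u = PP u (0, 0).
Proof.
apply/seteqP; split => z.
  move=> [s [s0 [s1 ->]]]; exists s, 0; rewrite s0 s1 lexx ler01 /=.
  by split => //; split => //; rewrite !mulr0 !addr0.
move=> [s [t [/andP[s0 s1] [_ ->]]]]; exists s; split => //; split => //.
by rewrite /= !mulr0 !addr0.
Qed.

Lemma PPC {R : realType} (u v : R * R) : PP u v = PP v u.
Proof.
by apply/seteqP; split => z [s [t [h1 [h2 ->]]]]; exists t, s; split => //;
  split => //; rewrite addrC [_ * _ + _]addrC.
Qed.

Lemma hline_null {R : realType} (A : set (R * R)) :
  (forall z, A z -> z.2 = 0) ->
  (forall x, measurable (xsection A x)) /\
  (@lebesgue_measure R \x @lebesgue_measure R)%E A = 0%E.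
Proof.
move=> hA.
have sec : forall x, xsection A x = set0 \/ xsection A x = [set 0].
  move=> x; have [h|h] := pselect (xsection A x 0).
    right; apply/seteqP; split => y.
      by move=> Ay; rewrite /= -(hA (x, y)) //; move: Ay; rewrite /xsection /= inE.
    by move=> /= ->.
  left; apply/seteqP; split => y //= Ay.
  have y0 : y = 0 by move: (Ay); rewrite /xsection /= inE => /hA.
  by apply: h; rewrite -y0.
split.
  by move=> x; case: (sec x) => ->.
rewrite /product_measure1 /=.
rewrite (eq_integral (fun=> 0%E)); first by rewrite integral0.
by move=> x _ /=; case: (sec x) => ->; rewrite ?measure0 ?lebesgue_measure_set1.
Qed.

Lemma vline_null {R : realType} (A : set (R * R)) :
  (forall z, A z -> z.1 = 0) ->
  (@lebesgue_measure R \x @lebesgue_measure R)%E A = 0%E.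
Proof.
move=> hA; rewrite /product_measure1 /=.
transitivity (\int[@lebesgue_measure R]_x ((\1_[set 0%R] x)%:E * lebesgue_measure (xsection A 0%R)))%E.
  apply: eq_integral.
  move=> x _; rewrite indicE; have [->|x0] := eqVneq x 0.
    by rewrite mem_set // mul1e.
  rewrite memNset //= ?mul0e.
    suff -> : xsection A x = set0 by rewrite measure0.
    apply/seteqP; split => y // Ay; move: Ay; rewrite /xsection /= inE.
    by move/hA => /= h; rewrite h eqxx in x0.
  by move=> /= h; rewrite h eqxx in x0.
rewrite ge0_integralZr //.
- rewrite integral_indic // setIT.
  by rewrite -[X in (X * _)%E]/(lebesgue_measure [set 0%R]) lebesgue_measure_set1 mul0e.
- by apply/measurable_EFinP; exact: measurable_indic.
Qed.


Definition Iv {R : realType} (a : R) : set R :=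
  [set x | exists t : R, 0 <= t <= 1 /\ x = t * a].

Lemma Iv_itv {R : realType} (a : R) :
  Iv a = if 0 <= a then `[0, a]%classic else `[a, 0]%classic.
Proof.
apply/seteqP; split => x.
  move=> [t [/andP[t0 t1] ->]]; case: ifP => a0 /=; rewrite in_itv /=.
    by rewrite mulr_ge0 //= ler_piMl.
  have a0' : a < 0 by rewrite ltNge a0.
  rewrite mulr_ge0_le0 ?(ltW a0') // andbT; nra.
case: ifP => a0 /=; rewrite in_itv /= => /andP[x0 x1].
  have [ea|an0] := eqVneq a 0.
    exists 0; rewrite lexx ler01 mul0r; split => //; rewrite ea in x1; lra.
  exists (x / a); split; last by rewrite divfK.
  have ap : 0 < a by rewrite lt_neqAle eq_sym an0 a0.
  by rewrite divr_ge0 //= ler_pdivrMr // mul1r.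
have an : a < 0 by rewrite ltNge a0.
exists (x / a); split; last by rewrite divfK // lt_eqF.
by rewrite ler_ndivlMr // mul0r x1 /= ler_ndivrMr // mul1r.
Qed.

Lemma measurable_Iv {R : realType} (a : R) : measurable (Iv a).
Proof. by rewrite Iv_itv; case: ifP => _; exact: measurable_itv. Qed.

Lemma lebesgue_Iv {R : realType} (a : R) : lebesgue_measure (Iv a) = `|a|%:E.
Proof.
rewrite Iv_itv; case: ifP => a0.
  rewrite lebesgue_measure_itv /= ger0_norm //; case: ltP => //.
    by move=> _; rewrite -EFinD subr0.
  move=> a0'; have a0'' : a <= 0 by rewrite -lee_fin.
  by have -> : a = 0 by apply/eqP; rewrite eq_le a0 a0''.
rewrite lebesgue_measure_itv /= lte_fin ltNge a0 /= ltr0_norm ?ltNge ?a0 //.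
by rewrite -EFinD sub0r.
Qed.

Lemma PP_area1 {R : realType} (u v : R * R) : u.1 != 0 ->
  (@lebesgue_measure R \x @lebesgue_measure R)%E (PP u v) = `|det2 u v|%:E.
Proof.
case: u => u1 u2; case: v => v1 v2 => /= u10; rewrite /det2 /=.
set d := u1 * v2 - u2 * v1.
set k := - (u2 / u1).
have [d0|dn0] := eqVneq d 0.
  pose A := [set z : R * R | exists s t : R, 0 <= s <= 1 /\ 0 <= t <= 1 /\
     z = (s * u1 + t * v1, 0)].
  have [mA A0] : (forall x, measurable (xsection A x)) /\
     (@lebesgue_measure R \x @lebesgue_measure R)%E A = 0%E.
    by apply: hline_null => z [s [t [_ [_ ->]]]].
  have e : u1 * v2 = u2 * v1 by apply/eqP; rewrite -subr_eq0 -/d d0.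
  have ev2 : v2 = u2 * v1 / u1 by rewrite -e; field; exact: u10.
  rewrite (_ : PP _ _ = [set z | A (z.1, z.2 + k * z.1)]).
    by rewrite vshear // A0 -/d d0 normr0.
    apply/seteqP; split => -[z1 z2] /=.
      move=> [s [t [hs [ht [-> ->]]]]]; exists s, t; split => //; split => //.
      congr pair; rewrite /k ev2; field; exact: u10.
    move=> [s [t [hs [ht [e1 e2]]]]]; exists s, t; split => //; split => //.
    rewrite e1; congr pair; move: e2; rewrite e1 /k ev2 => e2.
    have {}e2 : z2 = u2 / u1 * (s * u1 + t * v1).
      by apply/eqP; rewrite -subr_eq0 -e2; apply/eqP; ring.
    by rewrite /= e2; field; exact: u10.
have d0 : d != 0 by [].
set w := d / u1.
have w0 : w != 0 by rewrite /w mulf_neq0 // invr_neq0.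
set m := - (v1 / w).
pose Rt := Iv u1 `*` Iv w.
have mRt : measurable Rt := measurableX (measurable_Iv _) (measurable_Iv _).
pose Q := [set z : R * R | Rt (z.1 + m * z.2, z.2)].
have mQ : measurable Q.
  by have := measurable_hshear m measurableT mRt; rewrite setTI.
rewrite (_ : PP _ _ = [set z | Q (z.1, z.2 + k * z.1)]).
  rewrite vshear; last by move=> x; exact: measurable_xsection.
  rewrite /Q hshear // /Rt product_measure1E ?measurable_Iv //.
  rewrite [X in (X * _)%E](_ : _ = `|u1|%:E); last exact: lebesgue_Iv.
  rewrite [X in (_ * X)%E](_ : _ = `|w|%:E); last exact: lebesgue_Iv.
  rewrite -EFinM -normrM /w; congr (_%:E); congr `|_|; field; exact: u10.
- exact: measurable_Iv.
- exact: measurable_Iv.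
apply/seteqP; split => -[z1 z2] /=.
  move=> [s [t [hs [ht [-> ->]]]]]; rewrite /Q /Rt /=.
  split; [exists s | exists t]; split => //; rewrite /m /k /w /d; field.
  all: rewrite ?u10 //=.
move=> [[s [hs /= e1]] [t [ht /= e2]]]; exists s, t; split => //; split => // /=.
rewrite e2 in e1.
have ez1 : z1 = s * u1 - m * (t * w) by rewrite -e1; ring.
have ez2 : z2 = t * w - k * z1 by rewrite -e2; ring.
rewrite ez2 ez1.
rewrite /m /k /w /d; congr pair; field.
all: rewrite ?u10 //=; exact: d0.
Qed.

Lemma PP_area {R : realType} (u v : R * R) :
  (@lebesgue_measure R \x @lebesgue_measure R)%E (PP u v) = `|det2 u v|%:E.
Proof.
have [u10|u10] := eqVneq u.1 0; last exact: PP_area1.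
have [v10|v10] := eqVneq v.1 0.
  rewrite vline_null; last by move=> z [s [t [_ [_ ->]]]]; rewrite /= u10 v10 !mulr0 addr0.
  by rewrite /det2 u10 v10 !mul0r mulr0 subr0 normr0.
rewrite PPC PP_area1 // /det2; congr (_%:E); rewrite -normrN; congr `|_|; ring.
Qed.

Lemma area_PP {R : realType} (u v : R * R) : area2 (PP u v) = `|det2 u v|.
Proof. by rewrite /area2 PP_area. Qed.

Lemma area_seg {R : realType} (u : R * R) : area2 (segment0 u) = 0.
Proof. by rewrite segment0E area_PP /det2 /= !mulr0 subr0 normr0. Qed.

Lemma mixed_seg {R : realType} (u v : R * R) :
  mixed_area (segment0 u) (segment0 v) = `|det2 u v| / 2.
Proof. by rewrite /mixed_area msum_segE area_PP !area_seg !subr0. Qed.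


Definition rect {R : realType} (h v : R) : set (R * R) :=
  (`[0, h]%classic `*` `[0, v]%classic).

Lemma in_rect {R : realType} (h v : R) z :
  rect h v z <-> (0 <= z.1 <= h) /\ (0 <= z.2 <= v).
Proof. by rewrite /rect /= !in_itv. Qed.

Lemma rect_PP {R : realType} (h v : R) : 0 <= h -> 0 <= v ->
  rect h v = PP (h, 0) (0, v).
Proof.
move=> h0 v0; apply/seteqP; split => -[z1 z2].
  move=> /in_rect [/= hz1 hz2].
  have : Iv h z1 by rewrite Iv_itv h0 /= in_itv.
  have : Iv v z2 by rewrite Iv_itv v0 /= in_itv.
  move=> [t [ht ->]] [s [hs ->]]; exists s, t; split => //; split => //.
  by rewrite /= !mulr0 addr0 add0r.
move=> [s [t [hs [ht [-> ->]]]]]; apply/in_rect => /=.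
rewrite !mulr0 addr0 add0r.
have : Iv h (s * h) by exists s.
have : Iv v (t * v) by exists t.
by rewrite !Iv_itv h0 v0 /= !in_itv.
Qed.

Lemma area_rect {R : realType} (h v : R) : 0 <= h -> 0 <= v ->
  area2 (rect h v) = h * v.
Proof.
move=> h0 v0; rewrite rect_PP // area_PP /det2 /= mulr0 subr0 ger0_norm //.
exact: mulr_ge0.
Qed.

Lemma msum_rect {R : realType} (h v h' v' : R) : 0 <= h -> 0 <= v ->
  0 <= h' -> 0 <= v' ->
  Defs.msum (rect h v) (rect h' v') = rect (h + h') (v + v').
Proof.
move=> h0 v0 h0' v0'; apply/seteqP; split => z.
  move=> [a [b [/in_rect [ha1 ha2] [/in_rect [hb1 hb2] ->]]]].
  apply/in_rect => /=; move: ha1 ha2 hb1 hb2.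
  move=> /andP[? ?] /andP[? ?] /andP[? ?] /andP[? ?].
  by split; apply/andP; split; lra.
move=> /in_rect [/andP[z10 z11] /andP[z20 z21]].
exists (Num.min z.1 h, Num.min z.2 v).
exists (z.1 - Num.min z.1 h, z.2 - Num.min z.2 v).
split; first apply/in_rect => /=.
  by split; apply/andP; split; rewrite ?ge_min ?le_min ?lexx ?orbT ?z10 ?z20 ?h0 ?v0.
split; first apply/in_rect => /=.
  split; apply/andP; split.
  - by rewrite subr_ge0 ge_min lexx.
  - by case: (leP z.1 h) => hh; lra.
  - by rewrite subr_ge0 ge_min lexx.
  - by case: (leP z.2 v) => hh; lra.
by case: z {z10 z11 z20 z21} => z1 z2 /=; rewrite !subrKC.
Qed.

Lemma mixed_rect {R : realType} (h v h' v' : R) : 0 <= h -> 0 <= v ->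
  0 <= h' -> 0 <= v' ->
  mixed_area (rect h v) (rect h' v') = (h * v' + h' * v) / 2.
Proof.
move=> h0 v0 h0' v0'; rewrite /mixed_area msum_rect // !area_rect ?addr_ge0 //.
congr (_ / _); ring.
Qed.

Lemma zonoid_rect {R : realType} (h v : R) : 0 <= h -> 0 <= v ->
  zonoid2 (rect h v).
Proof.
move=> h0 v0; split; first split.
- by exists (0, 0); apply/in_rect; rewrite /= lexx h0 v0.
- split; first by apply: compact_setX; exact: segment_compact.
  move=> x y t /in_rect [/andP[? ?] /andP[? ?]] /in_rect [/andP[? ?] /andP[? ?]] t0 t1.
  apply/in_rect => /=; split; apply/andP; split; nra.
- exists (h / 2, v / 2) => x /in_rect [/andP[? ?] /andP[? ?]].
  apply/in_rect => /=; split; apply/andP; split; lra.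
Qed.


Lemma pairing_inv (f : {ffun 'I_6 -> 'I_6}) : is_pairing f -> forall i, f (f i) = i.
Proof. by move=> /forallP h i; have /andP[/eqP -> _] := h i. Qed.

Lemma pairing_fix (f : {ffun 'I_6 -> 'I_6}) : is_pairing f -> forall i, f i != i.
Proof. by move=> /forallP h i; have /andP[_ ->] := h i. Qed.

Lemma sq_prod {R : comRingType} (f : {ffun 'I_6 -> 'I_6}) (g : 'I_6 -> 'I_6 -> R) :
  is_pairing f -> (forall i j, g i j = g j i) ->
  (\prod_(i < 6 | (i < f i)%N) g i (f i)) ^+ 2 = \prod_(i < 6) g i (f i).
Proof.
move=> hf gs; have inv := pairing_inv hf; have fx := pairing_fix hf.
have injf : injective f by apply: (can_inj inv).
rewrite expr2 [RHS](bigID (fun i : 'I_6 => (i < f i)%N)) /=; congr (_ * _).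
rewrite [RHS](reindex_inj injf) /=; apply: eq_big => i.
  have := fx i; rewrite -(inj_eq val_inj) /= inv => ne.
  by apply/idP/idP => h; lia.
by rewrite inv gs.
Qed.

Definition chi {R : comRingType} (J : {set 'I_6}) (f : {ffun 'I_6 -> 'I_6}) : R :=
  \prod_(i < 6) (if (i \in J) != (f i \in J) then 1 else 0).

Lemma chi_all {R : comRingType} (J : {set 'I_6}) (f : {ffun 'I_6 -> 'I_6}) : (forall i, (i \in J) != (f i \in J)) -> chi J f = 1 :> R.
Proof. by move=> h; rewrite /chi big1 // => i _; rewrite h. Qed.

Lemma chi_not {R : comRingType} (J : {set 'I_6}) (f : {ffun 'I_6 -> 'I_6}) i : (i \in J) = (f i \in J) -> chi J f = 0 :> R.
Proof. by move=> h; rewrite /chi (bigD1 i) //= h eqxx mul0r. Qed.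

Lemma chiC {R : comRingType} (J : {set 'I_6}) (f : {ffun 'I_6 -> 'I_6}) : chi (~: J) f = chi J f :> R.
Proof. by rewrite /chi; apply: eq_bigr => i _; rewrite !inE; case: (i \in J); case: (f i \in J). Qed.

Lemma prod6 {R : comRingType} (F : 'I_6 -> R) (a b c d e f : 'I_6) :
  uniq [:: a; b; c; d; e; f] -> (forall i, i \in [:: a; b; c; d; e; f]) ->
  \prod_(i < 6) F i = F a * F b * F c * F d * F e * F f.
Proof.
move=> u cov; rewrite -(eq_bigl _ _ cov) -big_uniq //.
rewrite !big_cons big_nil /=; ring.
Qed.


Lemma det2C {R : realType} (u v : R * R) : det2 v u = - det2 u v.
Proof. rewrite /det2; ring. Qed.

Lemma sq_eq_ge0 {R : realType} (x y : R) : 0 <= x -> 0 <= y -> x ^+ 2 = y ^+ 2 -> x = y.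
Proof. by move=> x0 y0 /eqP; rewrite eqrXn2 // => /eqP. Qed.

Lemma ray_val {R : realType} (U : 'I_6 -> R * R) : type33_tuple U ->
  exists J : {set 'I_6}, exists K : R, 0 < K /\ #|J| = 3%N /\
    forall p : pairing, PhiU U p = K * chi J (sval p).
Proof.
move=> [nz [J [cJ [par1 [par2 npar]]]]].
have [a0 a0J] : exists a0, a0 \in J.
  by apply/card_gt0P; rewrite cJ.
have [b0 b0J] : exists b0, b0 \in ~: J.
  by apply/card_gt0P; have := cardsC J; rewrite cJ card_ord => h; lia.
rewrite inE in b0J.
set e := U a0; set f := U b0.
have Dp : 0 < `|det2 e f|.
  by rewrite normr_gt0; apply/eqP => h; apply: (npar a0 b0).
pose al i := if i \in J then `|det2 (U i) f| / `|det2 e f| else `|det2 e (U i)| / 2.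
have alp : forall i, 0 < al i.
  move=> i; rewrite /al; case: ifP => iJ.
    apply: divr_gt0 => //; rewrite normr_gt0; apply/eqP => h.
    by apply: (npar i b0).
  apply: divr_gt0 => //; rewrite normr_gt0; apply/eqP => h.
  by apply: (npar a0 i) => //; rewrite iJ.
have gal : forall i j, i \in J -> j \notin J -> `|det2 (U i) (U j)| / 2 = al i * al j.
  move=> i j iJ jJ; rewrite /al iJ (negbTE jJ).
  have pie : det2 (U i) e = 0 by apply: par1.
  have id : det2 (U i) (U j) * det2 e f = det2 (U i) f * det2 e (U j).
    by apply/eqP; rewrite -subr_eq0; apply/eqP; move: pie; rewrite /det2 => pie;
       rewrite -[RHS](mul0r (det2 (U j) f)) -pie /det2; ring.
  have Dn : `|det2 e f| != 0 by rewrite gt_eqF.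
  have id' : `|det2 (U i) (U j)| = `|det2 (U i) f| * `|det2 e (U j)| / `|det2 e f|.
    by rewrite -!normrM -id normrM mulfK.
  rewrite id'; field; exact: Dn.
exists J, (\prod_(i < 6) al i); split; first by apply: prodr_gt0 => i _.
split => // -[g hg] /=.
have inv := pairing_inv hg; have injg : injective g by apply: (can_inj inv).
have ge0 : 0 <= PhiU U (exist _ g hg).
  by apply: prodr_ge0 => i _; rewrite mixed_seg divr_ge0.
have sq : PhiU U (exist _ g hg) ^+ 2 = \prod_(i < 6) (`|det2 (U i) (U (g i))| / 2).
  rewrite /PhiU /Phi /=.
  under eq_bigr do rewrite mixed_seg.
  apply: (sq_prod (g := fun i j => `|det2 (U i) (U j)| / 2)) => // i j.
  by rewrite det2C normrN.
have [all|nall] := boolP [forall i, (i \in J) != (g i \in J)].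
  rewrite chi_all; last by move=> i; have /forallP := all; apply.
  rewrite mulr1; apply: sq_eq_ge0 => //; first by apply: prodr_ge0 => i _; apply/ltW.
  rewrite sq (eq_bigr (fun i => al i * al (g i))); last first.
    move=> i _; have /forallP /(_ i) := all.
    case: (boolP (i \in J)) => iJ /=.
      by move=> gi; apply: gal => //; rewrite -(negbK (g i \in J)) -gi.
    move=> gi; rewrite det2C normrN [RHS]mulrC; apply: gal => //.
    by move: gi; case: (g i \in J).
  by rewrite big_split /= -(reindex_inj (P := xpredT) (F := al) injg) expr2.
have [i hi] : exists i, (i \in J) = (g i \in J).
  move: nall; rewrite negb_forall => /existsP [i hi]; exists i.
  by move: hi; case: (i \in J); case: (g i \in J).
rewrite (chi_not hi) mulr0.
apply/eqP; rewrite -sqrf_eq0 sq (bigD1 i) //= mulf_eq0; apply/orP; left.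
rewrite mulf_eq0 normr_eq0; apply/orP; left; apply/eqP.
case: (boolP (i \in J)) => iJ.
  by apply: par1 => //; rewrite -hi.
by apply: par2 => //; rewrite -hi.
Qed.


Lemma labels (J1 J2 : {set 'I_6}) : #|J1| = 3%N -> #|J2| = 3%N -> #|J1 :&: J2| = 2%N ->
  exists a b c d e f : 'I_6,
  [/\ [/\ a \in J1, a \in J2, b \in J1 & b \in J2],
      [/\ c \in J1, c \notin J2, d \notin J1 & d \in J2],
      [/\ e \notin J1, e \notin J2, f \notin J1 & f \notin J2],
      a != b & e != f] /\
  forall i, i = a \/ i = b \/ i = c \/ i = d \/ i = e \/ i = f.
Proof.
move=> c1 c2 c12.
have cC : #|J1 :\: J2| = 1%N by have := cardsID J2 J1; rewrite c12 c1; lia.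
have cD : #|J2 :\: J1| = 1%N by have := cardsID J1 J2; rewrite (finset.setIC J2 J1) c12 c2; lia.
have cEF : #|~: (J1 :|: J2)| = 2%N.
  have := cardsUI J1 J2; have := cardsC (J1 :|: J2); rewrite card_ord c12 c1 c2; lia.
have /cards2P [a [b [ab Eab]]] : #|J1 :&: J2| == 2%N by rewrite c12.
have /cards1P [c Ec] : #|J1 :\: J2| == 1%N by rewrite cC.
have /cards1P [d Ed] : #|J2 :\: J1| == 1%N by rewrite cD.
have /cards2P [e [f [ef Eef]]] : #|~: (J1 :|: J2)| == 2%N by rewrite cEF.
have : a \in J1 :&: J2 by rewrite Eab !inE eqxx.
have : b \in J1 :&: J2 by rewrite Eab !inE eqxx orbT.
have : c \in J1 :\: J2 by rewrite Ec !inE.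
have : d \in J2 :\: J1 by rewrite Ed !inE.
have : e \in ~: (J1 :|: J2) by rewrite Eef !inE eqxx.
have : f \in ~: (J1 :|: J2) by rewrite Eef !inE eqxx orbT.
rewrite !inE !negb_or.
move=> /andP[fJ1 fJ2] /andP[eJ1 eJ2] /andP[dJ1 dJ2] /andP[cJ2 cJ1] /andP[bJ1 bJ2] /andP[aJ1 aJ2].
exists a, b, c, d, e, f; split; first by split.
move=> i.
case: (boolP (i \in J1)) => iJ1; case: (boolP (i \in J2)) => iJ2.
- have : i \in J1 :&: J2 by rewrite inE iJ1 iJ2.
  by rewrite Eab !inE => /orP[/eqP -> | /eqP ->]; [left | right; left].
- have : i \in J1 :\: J2 by rewrite !inE iJ1 iJ2.
  by rewrite Ec inE => /eqP ->; right; right; left.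
- have : i \in J2 :\: J1 by rewrite !inE iJ1 iJ2.
  by rewrite Ed inE => /eqP ->; right; right; right; left.
- have : i \in ~: (J1 :|: J2) by rewrite !inE (negbTE iJ1) (negbTE iJ2).
  by rewrite Eef !inE => /orP[/eqP -> | /eqP ->]; [do 4 right; left | do 5 right].
Qed.

Lemma neq_mem (x y : 'I_6) (S : {set 'I_6}) : x \in S -> y \notin S -> x <> y.
Proof. by move=> h1 h2 e; rewrite -e h1 in h2. Qed.

Lemma chi_ge0 {R : realType} (J : {set 'I_6}) g : 0 <= chi J g :> R.
Proof. by apply: prodr_ge0 => i _; case: ifP. Qed.

Ltac pc cov g l := let H := fresh "Hg" in
  case: (cov (g l)) => [H|[H|[H|[H|[H|H]]]]]; try by (exfalso; congruence).

Lemma construct {R : realType} (J1 J2 : {set 'I_6}) (X Y : R) :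
  #|J1| = 3%N -> #|J2| = 3%N -> #|J1 :&: J2| = 2%N -> 0 <= X -> 0 <= Y ->
  exists Z : 'I_6 -> set (R * R), (forall i, zonoid2 (Z i)) /\
    forall p : pairing, Phi Z p = X * chi J1 (sval p) + Y * chi J2 (sval p).
Proof.
move=> c1 c2 c12 X0 Y0.
pose hh i : R := if i \in J1 then (if i \in J2 then 1 else 8 * X)
                 else (if i \in J2 then 8 * Y else 0).
pose vv i : R := if (i \in J1) && (i \in J2) then 0 else 1.
have hh0 : forall i, 0 <= hh i.
  by move=> i; rewrite /hh; case: ifP; case: ifP => _ _ //; rewrite mulr_ge0.
have vv0 : forall i, 0 <= vv i by move=> i; rewrite /vv; case: ifP.
exists (fun i => rect (hh i) (vv i)); split.
  by move=> i; apply: zonoid_rect.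
move=> [g hg] /=.
have inv := pairing_inv hg; have fx := pairing_fix hg.
pose G i j := (hh i * vv j + hh j * vv i) / 2.
apply: sq_eq_ge0.
- by apply: prodr_ge0 => i _; rewrite mixed_rect // divr_ge0 // addr_ge0 // mulr_ge0.
- by rewrite addr_ge0 // mulr_ge0 // chi_ge0.
rewrite /Phi /=.
under eq_bigr do rewrite mixed_rect //.
rewrite (sq_prod (g := G)) //; last by move=> i j; rewrite /G addrC.
have [a [b [c [d [e [f [[[aJ1 aJ2 bJ1 bJ2] [cJ1 cJ2 dJ1 dJ2] [eJ1 eJ2 fJ1 fJ2] ab ef] cov]]]]]]] :=
  labels c1 c2 c12.
have nab : a <> b by move/eqP: ab.
have nef : e <> f by move/eqP: ef.
have nac := neq_mem aJ2 cJ2. have nad := neq_mem aJ1 dJ1.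
have nae := neq_mem aJ1 eJ1. have naf := neq_mem aJ1 fJ1.
have nbc := neq_mem bJ2 cJ2. have nbd := neq_mem bJ1 dJ1.
have nbe := neq_mem bJ1 eJ1. have nbf := neq_mem bJ1 fJ1.
have ncd := neq_mem cJ1 dJ1. have nce := neq_mem cJ1 eJ1.
have ncf := neq_mem cJ1 fJ1. have nde := neq_mem dJ2 eJ2.
have ndf := neq_mem dJ2 fJ2.
have u : uniq [:: a; b; c; d; e; f].
  rewrite /= !inE !negb_or; repeat (apply/andP; split) => //; apply/eqP; congruence.
have covb : forall i, i \in [:: a; b; c; d; e; f].
  by move=> i; case: (cov i) => [->|[->|[->|[->|[->|->]]]]]; rewrite !inE eqxx ?orbT.
rewrite /chi !(prod6 _ u covb).
have ia := inv a; have ib := inv b; have ic := inv c.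
have id := inv d; have ie := inv e; have iF := inv f.
have fa : g a <> a by move/eqP: (fx a).
have fb : g b <> b by move/eqP: (fx b).
have fc : g c <> c by move/eqP: (fx c).
have fd : g d <> d by move/eqP: (fx d).
have fe : g e <> e by move/eqP: (fx e).
have ff : g f <> f by move/eqP: (fx f).
clear covb u inv fx.
pc cov g a; pc cov g b; pc cov g c; pc cov g d; pc cov g e; pc cov g f.
all: repeat match goal with H : @eq (ordinal 6) _ _ |- _ => rewrite H; clear H end.
all: rewrite /G /hh /vv ?aJ1 ?aJ2 ?bJ1 ?bJ2 ?cJ1 ?dJ2 ?(negbTE cJ2) ?(negbTE dJ1)
  ?(negbTE eJ1) ?(negbTE eJ2) ?(negbTE fJ1) ?(negbTE fJ2) /=.
all: by field.
Qed.


Lemma cardC3 (J : {set 'I_6}) : #|J| = 3%N -> #|~: J| = 3%N.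
Proof. by move=> h; have := cardsC J; rewrite card_ord h; lia. Qed.

Lemma sub_eq3 (A B : {set 'I_6}) : #|A| = 3%N -> #|B| = 3%N -> #|A :&: B| = 3%N -> A = B.
Proof.
move=> cA cB cAB.
have e1 : A :&: B = A.
  apply/eqP; rewrite eqEcard subsetIl cAB cA //.
have sAB : A \subset B by apply/finset.setIidPl.
by apply/eqP; rewrite eqEcard sAB cA cB.
Qed.

Lemma inter2 (J1 J2 : {set 'I_6}) : #|J1| = 3%N -> #|J2| = 3%N ->
  J2 != J1 -> J2 != ~: J1 -> #|J1 :&: J2| = 2%N \/ #|J1 :&: ~: J2| = 2%N.
Proof.
move=> c1 c2 n1 n2.
have h := cardsID J2 J1; rewrite finset.setDE in h.
have [k3|k3] := eqVneq #|J1 :&: J2| 3%N.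
  by move/eqP: n1; rewrite (sub_eq3 c1 c2 k3).
have [k0|k0] := eqVneq #|J1 :&: J2| 0%N.
  have e : J1 = ~: J2 by apply: sub_eq3 => //; [exact: cardC3 | lia].
  by move/eqP: n2; rewrite e finset.setCK.
lia.
Qed.


Unset Implicit Arguments.
Theorem proposition7p5 (R : realType) (rho1 rho2 : set (pairing -> R)) :
  type33_ray rho1 -> type33_ray rho2 -> rho1 <> rho2 ->
  cone2 rho1 rho2 `<=` @Phi_image R.
Proof.
move=> [U1 [t1 ->]] [U2 [t2 ->]] neq w [x [y [[c1 [c10 ->]] [[c2 [c20 ->]] ->]]]].
have [J1 [K1 [K10 [cJ1 H1]]]] := ray_val t1.
have [J2 [K2 [K20 [cJ2 H2]]]] := ray_val t2.
have rays : (forall f, chi J2 f = chi J1 f :> R) -> False.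
  move=> hc; apply: neq; rewrite /ray_of; apply/seteqP; split => v [c [c0 ->]].
    exists (c * K1 / K2); split; first by rewrite divr_ge0 // ?mulr_ge0 // ltW.
    apply/funext => p; rewrite H1 H2 hc; field; exact: lt0r_neq0.
  exists (c * K2 / K1); split; first by rewrite divr_ge0 // ?mulr_ge0 // ltW.
  apply/funext => p; rewrite H1 H2 hc; field; exact: lt0r_neq0.
have n1 : J2 != J1 by apply/eqP => e; apply: rays => f; rewrite e.
have n2 : J2 != ~: J1 by apply/eqP => e; apply: rays => f; rewrite e chiC.
have [J2' [c2' [c12 hJ2']]] : exists J2' : {set 'I_6}, [/\ #|J2'| = 3%N, #|J1 :&: J2'| = 2%N &
    forall f, chi J2' f = chi J2 f :> R].
  have [h|h] := inter2 cJ1 cJ2 n1 n2.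
    by exists J2.
  by exists (~: J2); split => //; [exact: cardC3 | move=> f; rewrite chiC].
have [Z [zZ HZ]] := construct cJ1 c2' c12 (mulr_ge0 c10 (ltW K10)) (mulr_ge0 c20 (ltW K20)).
exists Z; split => //; apply/funext => p.
by rewrite HZ H1 H2 hJ2'; ring.
Qed.
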